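(* With the notation of the context, let $\beta^*=\inf_{x\in\Delta}F(x)$. For every $x^*\in\Delta$ with $F(x^* )=\beta^*$ there exists a relation $r_0$ of type 4b such that $f_{r_0}(x^* )=\beta^*$.
   Context: Fix an integer $n\ge2$ and free generators $\xi_1,\dots,\xi_n$ of a free group; throughout $i,j,k\in\{1,\dots,n\}$ and $t,s,p\in\{-1,+1\}$. Let $\Psi$ be the set of reduced words $\xi_i^{2t}$; $\xi_i^t\xi_j^{2s}$ ($i\ne j$); $\xi_i^t\xi_j^s\xi_k^p$ ($i\ne j$, $j\ne k$). For a letter $\xi_a^x$ let $S(\xi_a^x)\subset\Psi$ be the set of words in $\Psi$ beginning with $\xi_a^x$, namely $\{\xi_a^{2x}\}\cup\{\xi_a^x\xi_j^{2s}\}\cup\{\xi_a^x\xi_j^s\xi_k^p\}$; for $a\ne b$ let $S(\xi_a^x\xi_b^y)=\{\xi_a^x\xi_b^{2y}\}\cup\{\xi_a^x\xi_b^y\xi_k^p: k\ne b\}$. A relation $r$ is a pair $(\psi_r,\Psi_r)$ with $\psi_r\in\Psi$, $\Psi_r\subseteq\Psi$. Let $\mathcal{F}$ be the collection of the following relations (indices $i_0\ne j_0$, in type 5a $i_0,j_0,k_0$ pairwise distinct, all signs arbitrary): 1a: $\psi_r=\xi_{i_0}^{2t_0}$, $\Psi_r=\Psi\setminus S(\xi_{i_0}^{t_0})$; 2b: $\psi_r=\xi_{i_0}^{t_0}\xi_{j_0}^{2s_0}$, $\Psi_r=\Psi\setminus S(\xi_{i_0}^{t_0}\xi_{j_0}^{s_0})$;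 3a: $\psi_r=\xi_{i_0}^{t_0}\xi_{j_0}^{s_0}\xi_{i_0}^{t_0}$, $\Psi_r=\Psi\setminus S(\xi_{j_0}^{s_0}\xi_{i_0}^{t_0})$; 4b: $\psi_r=\xi_{i_0}^{t_0}\xi_{j_0}^{s_0}\xi_{i_0}^{-t_0}$, $\Psi_r=S(\xi_{i_0}^{t_0})$; 5a: $\psi_r=\xi_{i_0}^{t_0}\xi_{j_0}^{s_0}\xi_{k_0}^{p_0}$, $\Psi_r=\Psi\setminus S(\xi_{j_0}^{s_0}\xi_{k_0}^{p_0})$. Let $\Delta=\{x\in\mathbb{R}^\Psi: x(\psi)>0\ \forall\psi,\ \sum_{\psi}x(\psi)=1\}$. For a relation $r$ and $x\in\Delta$ put $x_r=x(\psi_r)$, $X_r=\sum_{\psi\in\Psi_r}x(\psi)$, $f_r(x)=\frac{1-x_r}{x_r}\cdot\frac{1-X_r}{X_r}$, and $F(x)=\max_{r\in\mathcal{F}}f_r(x)$. *)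

(* Defs.v *)
From HB Require Import structures.
From mathcomp Require Import all_boot all_order all_algebra.
From mathcomp Require Import reals.
Set Implicit Arguments. Unset Strict Implicit. Unset Printing Implicit Defensive.
Import Order.TTheory GRing.Theory Num.Theory.
Local Open Scope ring_scope.

(* A letter xi_i^t : generator index i : 'I_n and sign t (true = +1, false = -1). *)
Definition letter (n : nat) := ('I_n * bool)%type.

(* Raw encoding of a word of length 2 (a,b,None) = a b
   or of length 3 (a,b,Some c) = a b c. *)
Definition rawword (n : nat) := (letter n * letter n * option (letter n))%type.

(* Membership in Psi:
   - length 2: xi_i^{2t}, i.e. the two letters are equal;
   - length 3: xi_i^t xi_j^s xi_k^p reduced with i <> j, and either j <> k
     (type xi_i^t xi_j^s xi_k^p) or the last two letters coincide
     (type xi_i^t xi_j^{2s}). *)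
Definition inPsi (n : nat) (w : rawword n) : bool :=
  match w with
  | (a, b, None) => a == b
  | (a, b, Some c) => (a.1 != b.1) && ((b.1 != c.1) || (b == c))
  end.

Definition Psi (n : nat) := {w : rawword n | inPsi w}.

Definition wseq (n : nat) (w : Psi n) : seq (letter n) :=
  match val w with
  | (a, b, None) => [:: a; b]
  | (a, b, Some c) => [:: a; b; c]
  end.

Definition Spre (n : nat) (u : seq (letter n)) : {set Psi n} :=
  [set w | take (size u) (wseq w) == u].

Definition relation (n : nat) := (Psi n * {set Psi n})%type.

Definition is1a (n : nat) (r : relation n) : bool :=
  [exists i0 : 'I_n, exists t0 : bool,
     (wseq r.1 == [:: (i0, t0); (i0, t0)]) && (r.2 == ~: Spre [:: (i0, t0)])].

Definition is2b (n : nat) (r : relation n) : bool :=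
  [exists i0 : 'I_n, exists j0 : 'I_n, exists t0 : bool, exists s0 : bool,
     [&& i0 != j0,
         wseq r.1 == [:: (i0, t0); (j0, s0); (j0, s0)] &
         r.2 == ~: Spre [:: (i0, t0); (j0, s0)]]].

Definition is3a (n : nat) (r : relation n) : bool :=
  [exists i0 : 'I_n, exists j0 : 'I_n, exists t0 : bool, exists s0 : bool,
     [&& i0 != j0,
         wseq r.1 == [:: (i0, t0); (j0, s0); (i0, t0)] &
         r.2 == ~: Spre [:: (j0, s0); (i0, t0)]]].

Definition is4b (n : nat) (r : relation n) : bool :=
  [exists i0 : 'I_n, exists j0 : 'I_n, exists t0 : bool, exists s0 : bool,
     [&& i0 != j0,
         wseq r.1 == [:: (i0, t0); (j0, s0); (i0, ~~ t0)] &
         r.2 == Spre [:: (i0, t0)]]].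

Definition is5a (n : nat) (r : relation n) : bool :=
  [exists i0 : 'I_n, exists j0 : 'I_n, exists k0 : 'I_n,
   exists t0 : bool, exists s0 : bool, exists p0 : bool,
     [&& i0 != j0, j0 != k0, i0 != k0,
         wseq r.1 == [:: (i0, t0); (j0, s0); (k0, p0)] &
         r.2 == ~: Spre [:: (j0, s0); (k0, p0)]]].

Definition inFam (n : nat) (r : relation n) : bool :=
  [|| is1a r, is2b r, is3a r, is4b r | is5a r].

Definition inDelta (R : realType) (n : nat) (x : Psi n -> R) : Prop :=
  (forall w, 0 < x w) /\ \sum_(w : Psi n) x w = 1.

Definition xr (R : realType) (n : nat) (x : Psi n -> R) (r : relation n) : R :=
  x r.1.

Definition Xr (R : realType) (n : nat) (x : Psi n -> R) (r : relation n) : R :=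
  \sum_(w in r.2) x w.

Definition fr (R : realType) (n : nat) (r : relation n) (x : Psi n -> R) : R :=
  ((1 - xr x r) / xr x r) * ((1 - Xr x r) / Xr x r).

(* F(x) = max_{r in F} f_r(x); the family is nonempty and f_r >= 0 on Delta,
   so 0 as the neutral element of max is harmless. *)
Definition Fmax (R : realType) (n : nat) (x : Psi n -> R) : R :=
  \big[Num.max/0]_(r : relation n | inFam r) fr r x.

(* Main.v *)
Require Import Defs.
From HB Require Import structures.
From mathcomp Require Import all_boot all_order all_algebra.
From mathcomp Require Import reals.
From mathcomp Require Import ring lra.
Set Implicit Arguments. Unset Strict Implicit. Unset Printing Implicit Defensive.
Import Order.TTheory GRing.Theory Num.Theory.
Local Open Scope ring_scope.

Definition isB (n : nat) (w : Psi n) : bool :=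
  match val w with (a, _, Some c) => c == (a.1, ~~ a.2) | _ => false end.

Definition rawb (n : nat) (oth : 'I_n -> 'I_n) (w : rawword n) : rawword n :=
  match w with
  | (a, c, None) => (a, (oth a.1, true), Some (a.1, ~~ a.2))
  | (a, c, Some _) => (a, c, Some (a.1, ~~ a.2))
  end.

Definition bmap (n : nat) (oth : 'I_n -> 'I_n) (w : Psi n) : Psi n :=
  odflt w (insub (rawb oth (val w))).

Lemma val_bmap n (oth : 'I_n -> 'I_n) (H : forall i, oth i != i) (w : Psi n) :
  val (bmap oth w) = rawb oth (val w).
Proof.
rewrite /bmap; case: insubP => [u _ -> //|].
case: w => [[[a c] [e|]] /= Hw]; rewrite /inPsi /=.
- by move/andP: Hw => [Hac _]; rewrite Hac (eq_sym c.1) Hac.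
- by rewrite (eq_sym a.1) H.
Qed.

Lemma isB_bmap n (oth : 'I_n -> 'I_n) (H : forall i, oth i != i) (w : Psi n) :
  isB (bmap oth w).
Proof.
rewrite /isB val_bmap //; case: w => [[[a c] [e|]] /= Hw] /=; exact: eqxx.
Qed.

Lemma isB_wseq n (w : Psi n) :
  isB w = match wseq w with [:: a; _; c] => c == (a.1, ~~ a.2) | _ => false end.
Proof. by rewrite /isB /wseq; case: (val w) => [[a c] [e|]]. Qed.

Lemma good1 n (oth : 'I_n -> 'I_n) (H : forall i, oth i != i) l (w : Psi n) :
  w \in Spre [:: l] -> bmap oth w \in Spre [:: l].
Proof.
rewrite !inE /wseq val_bmap //.
by case: w => [[[a c] [e|]] /= Hw].
Qed.

Lemma good2 n (oth : 'I_n -> 'I_n) (H : forall i, oth i != i) l1 l2 (w : Psi n) :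
  l1.1 != l2.1 ->
  w \in Spre [:: l1; l2] -> bmap oth w \in Spre [:: l1; l2].
Proof.
move=> hl; rewrite !inE /wseq val_bmap //.
case: w => [[[a c] [e|]] /= Hw] //.
rewrite /inPsi in Hw; move/eqP: Hw => <-.
case/eqP => e1 e2; subst; by rewrite eqxx in hl.
Qed.

Lemma wit2 n (l1 l2 : letter n) : l1.1 != l2.1 -> exists w : Psi n, w \in Spre [:: l1; l2].
Proof.
move=> hl.
have pf : inPsi (l1, l2, Some l2) by rewrite /inPsi hl /=; apply/orP; right; exact: eqxx.
by exists (exist _ (l1, l2, Some l2) pf); rewrite inE.
Qed.

Lemma witC n (l : letter n) (u' : seq (letter n)) :
  exists w : Psi n, w \notin Spre (l :: u').
Proof.
have pf : inPsi ((l.1, ~~ l.2), (l.1, ~~ l.2), None) by rewrite /inPsi eqxx.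
exists (exist (fun w => is_true (@inPsi n w)) _ pf); rewrite inE /wseq /=.
by case: l {pf} => i b; apply/eqP => /= -[]; case: b.
Qed.

Lemma nonB_struct n (oth : 'I_n -> 'I_n) (H : forall i, oth i != i) (r : relation n) :
  inFam r -> ~~ is4b r ->
  ~~ isB r.1 /\ exists u, [/\ r.2 = ~: Spre u,
     (forall w, w \in Spre u -> bmap oth w \in Spre u),
     (exists w0, w0 \in Spre u) &
     exists w1, w1 \notin Spre u].
Proof.
rewrite /inFam => hF h4; rewrite (negbTE h4) /= in hF.
case/or4P: hF.
- case/existsP => i0 /existsP [t0 /andP [/eqP Hw /eqP H2]].
  rewrite isB_wseq Hw; split => //; exists [:: (i0, t0)]; split => //; try exact: witC.
  + by move=> w; apply: good1.
  + by exists r.1; rewrite inE Hw.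
- case/existsP => i0 /existsP [j0 /existsP [t0 /existsP [s0 /and3P [Hij /eqP Hw /eqP H2]]]].
  rewrite isB_wseq Hw xpair_eqE eq_sym (negbTE Hij); split => //; try exact: witC.
  exists [:: (i0, t0); (j0, s0)]; split => //; try exact: witC.
  + by move=> w; apply: good2.
  + exact: wit2.
- case/existsP => i0 /existsP [j0 /existsP [t0 /existsP [s0 /and3P [Hij /eqP Hw /eqP H2]]]].
  rewrite isB_wseq Hw xpair_eqE eqxx /=; split; first by case: t0 {Hw H2}.
  exists [:: (j0, s0); (i0, t0)]; split => //; try exact: witC.
  + by move=> w; apply: good2 => //; rewrite /= eq_sym.
  + by apply: (@wit2 n (j0, s0) (i0, t0)); rewrite /= eq_sym.
- case/existsP => i0 /existsP [j0 /existsP [k0 /existsP [t0 /existsP [s0 /existsP [p0 H5]]]]].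
  move: H5 => /and5P [Hij Hjk Hik /eqP Hw /eqP H2].
  rewrite isB_wseq Hw xpair_eqE eq_sym (negbTE Hik); split => //; try exact: witC.
  exists [:: (j0, s0); (k0, p0)]; split => //; try exact: witC.
  + by move=> w; apply: good2.
  + exact: wit2.
Qed.

Lemma fb_struct n (r : relation n) : is4b r -> r.1 \in r.2.
Proof.
case/existsP => i0 /existsP [j0 /existsP [t0 /existsP [s0 /and3P [Hij /eqP Hw /eqP H2]]]].
by rewrite H2 inE Hw.
Qed.
Lemma ginv (R : realType) (a : R) : a != 0 -> (1 - a)/a = a^-1 - 1.
Proof. by move=> h; rewrite mulrBl mul1r mulfV. Qed.

Lemma inv_le (R : realType) (x y : R) : 0 < x -> x <= y -> y^-1 <= x^-1.
Proof. by move=> hx hxy; rewrite lef_pV2 ?posrE // (lt_le_trans hx hxy). Qed.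

Lemma keyA (R : realType) (a b a' b' h m d : R) :
  0 < m -> 0 <= h -> 2 * h <= m -> 12 * h <= d * m ^+ 3 ->
  m <= a -> a <= 1 -> m <= b -> b <= 1 ->
  a - h <= a' -> a' <= 1 -> b - h <= b' -> b' <= 1 ->
  (1 - a') / a' * ((1 - b') / b') <= (1 - a) / a * ((1 - b) / b) + d / 2.
Proof.
move=> hm hh h2 h12 ma a1 mb b1 aa' a'1 bb' b'1.
have ha : 0 < a by lra.
have hb : 0 < b by lra.
have ha' : 0 < a' by lra.
have hb' : 0 < b' by lra.
rewrite !ginv ?gt_eqF //.
have im0 : 0 < m^-1 by rewrite invr_gt0.
have mim : m * m^-1 = 1 by rewrite mulfV ?gt_eqF.
have Hinv : forall c, m <= c -> c <= 1 -> 0 <= c^-1 - 1 <= m^-1 - 1.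
  move=> c mc c1; have hc : 0 < c by lra.
  rewrite subr_ge0 invf_ge1 // c1 /= lerD2r; exact: inv_le.
have Hinv' : forall c c', m <= c -> c - h <= c' -> c' <= 1 ->
   0 <= c'^-1 - 1 <= c^-1 - 1 + 2 * h * m^-1 ^+ 2.
  move=> c c' mc cc' c'1; have hc : 0 < c by lra.
  have hc' : 0 < c' by lra.
  rewrite subr_ge0 invf_ge1 // c'1 /=.
  have e1 : c'^-1 - c^-1 = c'^-1 * c^-1 * (c - c').
    by field; rewrite !gt_eqF.
  have i1 : c^-1 <= m^-1 by exact: inv_le.
  have i2 : c'^-1 <= 2 * m^-1.
    have : c'^-1 <= (m / 2)^-1 by apply: inv_le; lra.
    by rewrite invfM invrK mulrC.
  have p1 : 0 <= c'^-1 by rewrite invr_ge0 ltW.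
  have p2 : 0 <= c^-1 by rewrite invr_ge0 ltW.
  have : c'^-1 * c^-1 * (c - c') <= c'^-1 * c^-1 * h.
    by apply: ler_wpM2l; [rewrite mulr_ge0 | lra].
  have : c'^-1 * c^-1 <= 2 * m^-1 * m^-1 by apply: ler_pM.
  move=> q1 q2.
  have : c'^-1 * c^-1 * h <= 2 * m^-1 * m^-1 * h by apply: ler_wpM2r.
  rewrite expr2; lra.
have /andP[A0 A1] := Hinv a ma a1.
have /andP[B0 B1] := Hinv b mb b1.
have /andP[A'0 A'1] := Hinv' a a' ma aa' a'1.
have /andP[B'0 B'1] := Hinv' b b' mb bb' b'1.
set A := a^-1 - 1 in A0 A1 A'1 *.
set B := b^-1 - 1 in B0 B1 B'1 *.
set A' := a'^-1 - 1 in A'0 A'1 *.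
set B' := b'^-1 - 1 in B'0 B'1 *.
set im := m^-1 in im0 mim A1 B1 A'1 B'1 *.
set e := 2 * h * im ^+ 2 in A'1 B'1.
have e0 : 0 <= e by rewrite /e mulr_ge0 ?mulr_ge0 ?exprn_ge0 // ltW.
have eim : e <= im.
  rewrite /e expr2.
  have : 2 * h * im <= m * im by apply: ler_wpM2r => //; exact: ltW.
  rewrite mim => q.
  have := ler_wpM2r (ltW im0) q; rewrite mul1r; lra.
have de : 3 * e * im <= d / 2.
  rewrite /e.
  have : 12 * h * im ^+ 3 <= d * m ^+ 3 * im ^+ 3.
    by apply: ler_wpM2r => //; rewrite exprn_ge0 // ltW.
  rewrite -(mulrA d) -exprMn mim expr1n mulr1 => q.
  have -> : 3 * (2 * h * im ^+ 2) * im = (12 * h * im ^+ 3) / 2.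
    by rewrite !exprSr expr0; field.
  lra.
have s1 : A' * B' <= (A + e) * B' by apply: ler_wpM2r.
have s2 : (A + e) * B' <= (A + e) * (B + e) by apply: ler_wpM2l; lra.
have s3 : (A + e) * (B + e) = A * B + e * A + e * B + e * e by ring.
have s4 : e * A <= e * im by apply: ler_wpM2l; lra.
have s5 : e * B <= e * im by apply: ler_wpM2l; lra.
have s6 : e * e <= e * im by apply: ler_wpM2l; lra.
have s7 : 3 * e * im = e * im + e * im + e * im by ring.
lra.
Qed.

Lemma keyB (R : realType) (a b a' b' : R) :
  0 < a -> a < a' -> a' <= 1 -> 0 < b -> b <= b' -> b' <= 1 -> b < 1 ->
  (1 - a') / a' * ((1 - b') / b') < (1 - a) / a * ((1 - b) / b).
Proof.
move=> ha aa' a'1 hb bb' b'1 b1.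
have ha' : 0 < a' by lra.
have hb' : 0 < b' by lra.
rewrite !ginv ?gt_eqF //.
have i1 : a'^-1 < a^-1 by rewrite ltf_pV2 ?posrE.
have i2 : b'^-1 <= b^-1 by exact: inv_le.
have p1 : 0 <= a'^-1 - 1 by rewrite subr_ge0 invf_ge1.
have p2 : 0 <= b'^-1 - 1 by rewrite subr_ge0 invf_ge1.
have p3 : 0 < b^-1 - 1 by rewrite subr_gt0 invf_gt1.
have : (a'^-1 - 1) * (b'^-1 - 1) <= (a'^-1 - 1) * (b^-1 - 1).
  by apply: ler_wpM2l => //; lra.
have : (a'^-1 - 1) * (b^-1 - 1) < (a^-1 - 1) * (b^-1 - 1).
  by rewrite ltr_pM2r //; lra.
lra.
Qed.

Definition SD (R : realType) n (oth : 'I_n -> 'I_n) (A : {set Psi n}) : R :=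
  \sum_(w | ~~ isB w) ((w \in A)%:R - (bmap oth w \in A)%:R).

Lemma sum_indic (R : realType) n (u : Psi n) (A : {set Psi n}) :
  \sum_(v in A) ((u \in [set v])%:R : R) = (u \in A)%:R.
Proof.
case: (boolP (u \in A)) => uA.
  rewrite (bigD1 u) //= inE eqxx big1 ?addr0 // => v /andP [_ vu].
  by rewrite inE eq_sym (negbTE vu).
rewrite big1 // => v vA; rewrite inE; case: eqP => // e.
by rewrite e vA in uA.
Qed.

Lemma sumSD (R : realType) n (oth : 'I_n -> 'I_n) (A : {set Psi n}) :
  \sum_(v in A) SD R oth [set v] = SD R oth A.
Proof.
rewrite /SD exchange_big /=; apply: eq_bigr => w _.
by rewrite sumrB !sum_indic.
Qed.

Lemma SDT (R : realType) n (oth : 'I_n -> 'I_n) : SD R oth setT = 0.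
Proof. by rewrite /SD big1 // => w _; rewrite !inE subrr. Qed.

Lemma SD_lb (R : realType) n (oth : 'I_n -> 'I_n) (A : {set Psi n}) :
  - (\sum_(w : Psi n | ~~ isB w) (1 : R)) <= SD R oth A.
Proof.
rewrite /SD -sumrN; apply: ler_sum => w _.
by case: (w \in A); case: (bmap oth w \in A) => /=; lra.
Qed.

Lemma SD_C (R : realType) n (oth : 'I_n -> 'I_n) (S : {set Psi n}) :
  (forall w, w \in S -> bmap oth w \in S) -> 0 <= SD R oth (~: S).
Proof.
move=> hg; rewrite /SD; apply: sumr_ge0 => w _; rewrite !inE.
case wS: (w \in S); case bS: (bmap oth w \in S) => /=; try lra.
by rewrite hg in bS.
Qed.

Lemma SD_1 (R : realType) n (oth : 'I_n -> 'I_n) (H : forall i, oth i != i) (v : Psi n) :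
  ~~ isB v -> SD R oth [set v] = 1.
Proof.
move=> hv; rewrite /SD (bigD1 v) //= !inE eqxx.
have -> : (bmap oth v == v) = false.
  by apply/negbTE; apply: contraNneq hv => <-; exact: isB_bmap.
rewrite big1 ?addr0 /= ?subr0 // => w /andP [hw wv].
rewrite !inE (negbTE wv).
have -> : (bmap oth w == v) = false.
  by apply/negbTE; apply: contraNneq hv => <-; exact: isB_bmap.
by rewrite subrr.
Qed.

Lemma sum_split (R : realType) n (x : Psi n -> R) (A : {set Psi n}) :
  \sum_w x w = \sum_(w in A) x w + \sum_(w in ~: A) x w.
Proof.
rewrite (bigID (fun w => w \in A)) /=; congr (_ + _).
by apply: eq_bigl => w; rewrite inE.
Qed.

Lemma sum_ge_elem (R : realType) n (x : Psi n -> R) (A : {set Psi n}) v :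
  (forall w, 0 <= x w) -> v \in A -> x v <= \sum_(w in A) x w.
Proof.
move=> h vA; rewrite (bigD1 v) //= lerDl; apply: sumr_ge0 => w _; exact: h.
Qed.

Lemma sum_le1 (R : realType) n (x : Psi n -> R) (A : {set Psi n}) :
  inDelta x -> \sum_(w in A) x w <= 1.
Proof.
move=> [hp hs]; rewrite -hs (sum_split x A) lerDl; apply: sumr_ge0 => w _.
exact: ltW.
Qed.

Lemma elem_le1 (R : realType) n (x : Psi n -> R) v : inDelta x -> x v <= 1.
Proof.
move=> hx; have := sum_le1 [set v] hx; by rewrite big_set1.
Qed.

Lemma fr_ge0 (R : realType) n (x : Psi n -> R) (r : relation n) :
  inDelta x -> 0 <= fr r x.
Proof.
move=> hx; rewrite /fr /xr /Xr; apply: mulr_ge0; apply: divr_ge0.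
- by rewrite subr_ge0 elem_le1.
- by rewrite ltW //; case: hx.
- by rewrite subr_ge0 sum_le1.
- by apply: sumr_ge0 => w _; apply: ltW; case: hx.
Qed.

Lemma frle (R : realType) n (x : Psi n -> R) (r : relation n) :
  inFam r -> fr r x <= Fmax x.
Proof. by move=> h; rewrite /Fmax (bigD1 r) //= le_max lexx. Qed.

Unset Implicit Arguments.
Set Strict Implicit.
Theorem lemma5p4 (R : realType) (n : nat) (hn : (2 <= n)%N)
  (xs : Psi n -> R) :
  inDelta xs ->
  (forall x : Psi n -> R, inDelta x -> Fmax xs <= Fmax x) ->
  exists r0 : relation n, is4b r0 /\ fr r0 xs = Fmax xs.
Proof.
move=> hD Hmin; have [xpos xsum] := hD.
case: (boolP [exists r : relation n, is4b r && (fr r xs == Fmax xs)]).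
  by case/existsP => r /andP [h1 /eqP h2]; exists r.
move=> Hno; exfalso.
set M := Fmax xs.
have Hno' : forall r, is4b r -> fr r xs < M.
  move=> r h4; have hF : inFam r by apply/orP; right; apply/orP; right; apply/orP; right; apply/orP; left.
  rewrite lt_neqAle frle // andbT; apply: contra Hno => /eqP e.
  by apply/existsP; exists r; rewrite h4 e eqxx.
have h0 : (0 < n)%N by apply: ltnW.
pose i0 : 'I_n := Ordinal h0.
pose j0 : 'I_n := Ordinal hn.
have ij : i0 != j0 by rewrite -val_eqE.
pose oth (i : 'I_n) := if i == i0 then j0 else i0.
have Hoth : forall i, oth i != i.
  move=> i; rewrite /oth; have [->|hi] := eqVneq i i0; first by rewrite eq_sym.
  by rewrite eq_sym.
have pf : inPsi ((i0, true), (j0, true), Some (i0, false)).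
  by rewrite /inPsi /=.
pose w4 : Psi n := exist (fun w => is_true (@inPsi n w)) _ pf.
pose r4 : relation n := (w4, Spre [:: (i0, true)]).
have h4 : is4b r4.
  apply/existsP; exists i0; apply/existsP; exists j0; apply/existsP; exists true.
  by apply/existsP; exists true; rewrite ij /= !eqxx.
have Mpos : 0 < M by exact: (le_lt_trans (fr_ge0 r4 hD) (Hno' r4 h4)).
pose m := (\sum_(w : Psi n) (xs w)^-1)^-1.
have mle : forall v, m <= xs v.
  move=> v; rewrite -[xs v]invrK; apply: inv_le; first by rewrite invr_gt0.
  rewrite (bigD1 v) //= lerDl; apply: sumr_ge0 => w _; rewrite invr_ge0 ltW //.
have m0 : 0 < m.
  rewrite invr_gt0 (bigD1 w4) //=; apply: ltr_pwDl; first by rewrite invr_gt0.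
  by apply: sumr_ge0 => w _; rewrite invr_ge0 ltW.
have m1 : m <= 1 := le_trans (mle w4) (elem_le1 w4 hD).
pose S4 := \sum_(r : relation n | is4b r) (M - fr r xs)^-1.
have S40 : 0 <= S4.
  by apply: sumr_ge0 => r hr; rewrite invr_ge0 subr_ge0 ltW // Hno'.
pose d := (1 + S4)^-1.
have d0 : 0 < d by rewrite invr_gt0; lra.
have d1 : d <= 1 by rewrite invf_le1; lra.
have dle : forall r, is4b r -> d <= M - fr r xs.
  move=> r hr; have hp : 0 < M - fr r xs by rewrite subr_gt0 Hno'.
  rewrite -[M - fr r xs]invrK; apply: inv_le; first by rewrite invr_gt0.
  rewrite /S4 (bigD1 r) //=; have : 0 <= \sum_(i | is4b i && (i != r)) (M - fr i xs)^-1.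
    by apply: sumr_ge0 => i /andP [hi _]; rewrite invr_ge0 subr_ge0 ltW // Hno'.
  lra.
pose K := \sum_(w : Psi n | ~~ isB w) (1 : R) + 1.
have K0 : 1 <= K by rewrite /K lerDr sumr_ge0.
pose h := d * m ^+ 3 / 12.
have hE : 12 * h = d * m ^+ 3 by rewrite /h; field.
have m3 : m ^+ 3 <= m.
  rewrite exprS -[X in _ <= X]mulr1; apply: ler_wpM2l; first exact: ltW.
  by rewrite exprn_ile1 // ltW.
have dm3 : d * m ^+ 3 <= m ^+ 3.
  by rewrite -[X in _ <= X]mul1r; apply: ler_wpM2r => //; rewrite exprn_ge0 // ltW.
have m30 : 0 <= d * m ^+ 3 by rewrite mulr_ge0 ?exprn_ge0 // ltW.
have hh0 : 0 <= h by lra.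
have hE12 : 12 * h <= d * m ^+ 3 by rewrite hE.
have hh2 : 2 * h <= m by lra.
pose t := h / K.
have t0 : 0 <= t by rewrite divr_ge0 //; lra.
have tK : t * K = h by rewrite /t; field; rewrite gt_eqF //; lra.
pose x' := fun v => xs v + t * SD R oth [set v].
have sx' : forall A : {set Psi n}, \sum_(v in A) x' v = \sum_(v in A) xs v + t * SD R oth A.
  by move=> A; rewrite big_split /= -mulr_sumr sumSD.
have lbx' : forall A : {set Psi n}, \sum_(v in A) xs v - h <= \sum_(v in A) x' v.
  move=> A; rewrite sx'; have := SD_lb R oth A.
  rewrite -/K => q.
  have q2 : - K <= SD R oth A by rewrite /K; lra.
  have := ler_wpM2l t0 q2; rewrite mulrN tK; lra.
have lbx1 : forall v, xs v - h <= x' v.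
  by move=> v; have := lbx' [set v]; rewrite !big_set1.
have hD' : inDelta x'.
  split.
    by move=> v; have := lbx1 v; have := mle v; lra.
  have e : forall F : Psi n -> R, \sum_v F v = \sum_(v in [set: Psi n]) F v.
    by move=> F; apply: eq_bigl => v; rewrite inE.
  by rewrite e sx' SDT mulr0 addr0 -e.
have := Hmin x' hD'.
suff : Fmax x' < M by rewrite -/M; lra.
rewrite /Fmax; apply: (big_ind (fun y => y < M)) => //.
  by move=> a b ha hb; rewrite gt_max ha hb.
move=> r hF; case h4r : (is4b r).
  have r12 := fb_struct h4r.
  have ha := mle r.1.
  have hb : m <= Xr xs r.
    by apply: (le_trans ha); apply: sum_ge_elem => // w; apply: ltW.
  have k := keyA m0 hh0 hh2 (hE12) ha (elem_le1 r.1 hD) hb (sum_le1 r.2 hD)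
    (lbx1 r.1) (elem_le1 r.1 hD') (lbx' r.2) (sum_le1 r.2 hD').
  have q := dle r h4r; have q2 := Hno' r h4r.
  rewrite /fr /xr /Xr in q q2 hb k *.
  lra.
have [nB [u [e2 hg [w0 hw0] [w1 hw1]]]] := nonB_struct Hoth hF (negbT h4r).
have aa' : x' r.1 = xs r.1 + t by rewrite /x' SD_1 // mulr1.
have bb' : Xr xs r <= Xr x' r.
  rewrite /Xr sx' e2 lerDl; apply: mulr_ge0 => //; exact: SD_C.
have b1 : Xr xs r < 1.
  rewrite -xsum (sum_split xs r.2) ltrDl e2 setCK.
  apply: (lt_le_trans (xpos w0)); apply: sum_ge_elem => // w; exact: ltW.
have b0 : 0 < Xr xs r.
  apply: (lt_le_trans (xpos w1)); rewrite /Xr e2; apply: sum_ge_elem.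
    by move=> w; exact: ltW.
  by rewrite inE.
have hm3 : 0 < d * m ^+ 3 by rewrite mulr_gt0 // exprn_gt0.
have t0' : 0 < t by rewrite /t divr_gt0 //; lra.
have k := keyB (xpos r.1) (_ : xs r.1 < x' r.1) (elem_le1 r.1 hD') b0 bb' (sum_le1 r.2 hD') b1.
have q := frle xs hF.
rewrite /fr /xr /Xr in k q b0 b1 bb' aa' *.
rewrite -/M in q.
have : xs r.1 < x' r.1 by rewrite aa'; lra.
move=> /k; lra.
Qed.
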